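(* Let $L=1$ and $\vec m=(a,b)\in\mathcal R^2$ be arbitrary. For every topological space $X$ and every $n\ge1$, $\partial_n\circ\mathcal{SD}_n=\mathcal{SD}_{n-1}\circ\partial_n$ as maps $\mathcal K_n(X)\to\mathcal K_{n-1}(X)$ (and trivially for $n=0$).
   Context: $\mathcal R$ is a commutative ring with unit. $\mathcal S_n(X)$ = continuous maps $[0,1]^n\to X$ ($[0,1]^0=\{0\}$), $\mathcal K_n(X)$ the free $\mathcal R$-module on $\mathcal S_n(X)$, $\mathcal K_{-1}(X)=0$. Boundary: for $n\ge1$, $\partial_n(T)=\sum_{j=1}^n(-1)^{j+1}(a\langle T\rangle_{n,0,j}+b\langle T\rangle_{n,1,j})$ where $\langle T\rangle_{n,i,j}(x_1,\dots,x_{n-1})=T(x_1,\dots,x_{j-1},i,x_j,\dots,x_{n-1})$ ($\langle T\rangle_{1,i,1}(0)=T(i)$), extended linearly, $\partial_0=0$. Subdivision maps $\mathcal{SD}_n:\mathcal K_n(X)\to\mathcal K_n(X)$ ($\mathcal R$-linear): $\mathcal{SD}_{-1}=0$, $\mathcal{SD}_0(T)=-T$, and for $n\ge1$ $$\mathcal{SD}_n(T)=\sum_{\vec e\in\{0,2\}^n}\ \sum_{\vec v\in\mathcal V_{\vec e,n}}\Big(-\prod_{i=1}^nv_i\Big)\,T\circ h_{\vec e,\vec v},$$ where $\mathcal V_{\vec e,n}$ is the set of $\vec v\in\{-1,1\}^n$ with $v_i=1$ whenever $e_i=0$ (and $v_i\in\{-1,1\}$ arbitrary when $e_i=2$), and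 $h_{\vec e,\vec v}:[0,1]^n\to[0,1]^n$, $h_{\vec e,\vec v}(x)_i=\frac13(e_i+v_ix_i)$. *)

(* Defs.v *)
From HB Require Import structures.
From mathcomp Require Import all_boot all_order all_algebra.
From mathcomp Require Import boolp classical_sets reals topology normedtype.
Import numFieldNormedType.Exports.
Set Implicit Arguments. Unset Strict Implicit. Unset Printing Implicit Defensive.
Import Order.TTheory GRing.Theory Num.Theory.
Local Open Scope ring_scope.
Local Open Scope classical_set_scope.

Section Cubes.
Variable (R : realType) (X : topologicalType).

(* [0,1]^n as a subset of row vectors 'rV[R]_n ('rV_0 is the one-point space {0}). *)
Definition cube (n : nat) : set 'rV[R]_n :=
  [set x | forall i : 'I_n, 0 <= x ord0 i <= 1].

Definition clamp (n : nat) (x : 'rV[R]_n) : 'rV[R]_n :=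
  \row_i (Num.min 1 (Num.max 0 (x ord0 i))).

(* A singular n-cube (continuous map [0,1]^n -> X) is represented canonically
   by the function f : R^n -> X with f = f o clamp, continuous on [0,1]^n. *)
Definition singular_cube (n : nat) (f : 'rV[R]_n -> X) : Prop :=
  {within (@cube n), continuous f} /\ forall x, f x = f (clamp x).

(* precomposition of a cube with a map g sending [0,1]^m to [0,1]^n,
   put in canonical form *)
Definition precomp (n m : nat) (T : 'rV[R]_n -> X) (g : 'rV[R]_m -> 'rV[R]_n)
  : 'rV[R]_m -> X := fun x => T (g (clamp x)).

(* formal R-linear combinations of (representatives of) cubes *)
Definition chain (Rg : Type) (n : nat) := seq (Rg * ('rV[R]_n -> X)).

(* membership of a formal combination in K_n(X) *)
Definition is_chain (Rg : Type) (n : nat) (c : chain Rg n) : Prop :=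
  foldr (fun p P => singular_cube p.2 /\ P) True c.

(* coefficient of the generator U: K_n(X) is the free module, so two formal
   combinations are equal in K_n(X) iff all coefficients agree *)
Definition coeff (Rg : pzRingType) (n : nat) (c : chain Rg n)
  (U : 'rV[R]_n -> X) : Rg :=
  \sum_(p <- c) (if `[< p.2 = U >] then p.1 else 0).

Definition lin (Rg : pzRingType) (n m : nat)
  (g : ('rV[R]_n -> X) -> chain Rg m) (c : chain Rg n) : chain Rg m :=
  flatten [seq [seq (p.1 * q.1, q.2) | q <- g p.2] | p <- c].

(* insertion of the constant c at (0-indexed) position j *)
Definition ins (n : nat) (j : 'I_n.+1) (c : R) (x : 'rV[R]_n) : 'rV[R]_n.+1 :=
  \row_k (match unlift j k with None => c | Some k' => x ord0 k' end).

(* <T>_{n+1,i,j+1} *)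
Definition face (n : nat) (T : 'rV[R]_n.+1 -> X) (i : R) (j : 'I_n.+1)
  : 'rV[R]_n -> X := precomp T (ins j i).

(* boundary of a generator in degree n+1 >= 1 (sign (-1)^{(j+1)+1} = (-1)^j
   for the 0-indexed j) *)
Definition bd_gen (Rg : pzRingType) (a b : Rg) (n : nat) (T : 'rV[R]_n.+1 -> X)
  : chain Rg n :=
  flatten [seq [:: ((-1) ^+ j * a, face T 0 j); ((-1) ^+ j * b, face T 1 j)]
          | j : 'I_n.+1 <- enum 'I_n.+1].

(* e : bool-encoded vector in {0,2}^n (true = 2), v : bool-encoded vector in
   {-1,1}^n (true = -1) *)
Definition esel (b : bool) : R := if b then 2 else 0.
Definition vsel (Rg : pzRingType) (b : bool) : Rg := if b then -1 else 1.

Definition h (n : nat) (e v : {ffun 'I_n -> bool}) (x : 'rV[R]_n) : 'rV[R]_n :=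
  \row_i ((esel (e i) + vsel R (v i) * x ord0 i) / 3).

(* v in V_{e,n}: v_i = 1 whenever e_i = 0 *)
Definition inV (n : nat) (e v : {ffun 'I_n -> bool}) : bool :=
  [forall i, ~~ e i ==> ~~ v i].

Definition SD_gen (Rg : pzRingType) (n : nat) (T : 'rV[R]_n -> X) : chain Rg n :=
  match n return ('rV[R]_n -> X) -> chain Rg n with
  | 0 => fun T => [:: (-1, T)]
  | n'.+1 => fun T =>
     [seq (- \prod_(i < n'.+1) vsel Rg (ev.2 i), precomp T (h ev.1 ev.2))
     | ev : ({ffun 'I_n'.+1 -> bool} * {ffun 'I_n'.+1 -> bool})%type <- enum [set ev : {ffun 'I_n'.+1 -> bool} * {ffun 'I_n'.+1 -> bool}
                  | inV ev.1 ev.2]]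
  end T.

End Cubes.

(* Main.v *)
Require Import Defs.
From HB Require Import structures.
From mathcomp Require Import all_boot all_order all_algebra.
From mathcomp Require Import boolp classical_sets reals topology normedtype.
From mathcomp Require Import ring lra.
Import numFieldNormedType.Exports.
Set Implicit Arguments. Unset Strict Implicit. Unset Printing Implicit Defensive.
Import Order.TTheory GRing.Theory Num.Theory.
Local Open Scope ring_scope.

Section Pf.
Variables (Rg : comPzRingType) (R : realType) (X : topologicalType).

Definition dl (m : nat) (F U : 'rV[R]_m -> X) : Rg := if `[< F = U >] then 1 else 0.

Lemma coeffE m (c : chain R X Rg m) U :
  coeff c U = \sum_(p <- c) p.1 * dl p.2 U.
Proof. by apply: eq_bigr => p _; rewrite /dl; case: ifP; rewrite ?mulr1 ?mulr0. Qed.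

Lemma coeff_lin m k (g : ('rV[R]_m -> X) -> chain R X Rg k) c U :
  coeff (lin g c) U = \sum_(p <- c) p.1 * coeff (g p.2) U.
Proof.
rewrite coeffE /lin big_flatten big_map; apply: eq_bigr => p _.
rewrite coeffE big_map mulr_sumr; apply: eq_bigr => q _ /=; by rewrite mulrA.
Qed.

Lemma coeff_lin2 m k l (g : ('rV[R]_k -> X) -> chain R X Rg l)
  (f : ('rV[R]_m -> X) -> chain R X Rg k) c U :
  coeff (lin g (lin f c)) U = \sum_(p <- c) p.1 * coeff (lin g (f p.2)) U.
Proof.
rewrite coeff_lin /lin big_flatten big_map; apply: eq_bigr => p _.
rewrite big_map coeff_lin mulr_sumr; apply: eq_bigr => q _ /=; by rewrite mulrA.
Qed.

Lemma coeff_bd (a b : Rg) n (T : 'rV[R]_n.+1 -> X) U :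
  coeff (bd_gen a b T) U = \sum_(j < n.+1)
    ((-1) ^+ j * a * dl (face T 0 j) U + (-1) ^+ j * b * dl (face T 1 j) U).
Proof.
rewrite coeffE /bd_gen big_flatten big_map big_enum /=; apply: eq_bigr => j _.
by rewrite !big_cons big_nil addr0.
Qed.

Definition ext n (j : 'I_n.+1) (c : bool) (g : {ffun 'I_n -> bool}) : {ffun 'I_n.+1 -> bool} :=
  [ffun k => if unlift j k is Some k' then g k' else c].

Lemma ext_j n (j : 'I_n.+1) c g : ext j c g j = c.
Proof. by rewrite /ext ffunE unlift_none. Qed.
Lemma ext_lift n (j : 'I_n.+1) c g k : ext j c g (lift j k) = g k.
Proof. by rewrite /ext ffunE liftK. Qed.

Lemma sum_ext (K : Type) (idx : K) (op : Monoid.com_law idx) n (j : 'I_n.+1) (F : {ffun 'I_n.+1 -> bool} -> K) :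
  \big[op/idx]_f F f = \big[op/idx]_c \big[op/idx]_g F (ext j c g).
Proof.
rewrite pair_big /=.
rewrite (reindex (fun p : bool * {ffun 'I_n -> bool} => ext j p.1 p.2)) //.
exists (fun f : {ffun 'I_n.+1 -> bool} => (f j, [ffun k : 'I_n => f (lift j k)])) => [[c g] _|f _] /=.
  by rewrite ext_j; congr pair; apply/ffunP => k; rewrite ffunE ext_lift.
apply/ffunP => k; rewrite /ext ffunE; case: unliftP => [k' ->|->] //.
by rewrite ffunE.
Qed.


Lemma coeff_SD m (T : 'rV[R]_m -> X) U :
  coeff (@SD_gen R X Rg m T) U = \sum_(e : {ffun 'I_m -> bool}) \sum_(v : {ffun 'I_m -> bool})
    (if inV e v then - (\prod_i vsel Rg (v i)) * dl (precomp T (h e v)) U else 0).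
Proof.
case: m T U => [|m] T U.
  pose e0 := [ffun i : 'I_0 => false].
  have He : xpredT =1 pred1 e0 by move=> x; apply/esym/eqP/ffunP => -[k hk]; exfalso; move: hk; by rewrite ltn0.
  rewrite (big_pred1 e0) // (big_pred1 e0) //.
  have -> : inV e0 e0 by apply/forallP => -[k hk]; exfalso; move: hk; by rewrite ltn0.
  rewrite big_ord0.
  have -> : precomp T (h e0 e0) = T.
    by apply/funext => x; rewrite /precomp; congr T; apply/rowP => -[k hk]; exfalso; move: hk; by rewrite ltn0.
  by rewrite coeffE /= big_cons big_nil addr0.
rewrite coeffE /= big_map big_enum /=.
rewrite big_mkcond pair_big /=; apply: eq_bigr => -[e v] _ /=.
rewrite (_ : _ \in _ = inV e v) //; by apply/idP/idP; rewrite in_setE.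
Qed.


Lemma inV_ext n (j : 'I_n.+1) c d e v :
  inV (ext j c e) (ext j d v) = (~~ c ==> ~~ d) && inV e v.
Proof.
apply/idP/idP.
  move/forallP=> H; apply/andP; split; first by have := H j; rewrite !ext_j.
  by apply/forallP => k; have := H (lift j k); rewrite !ext_lift.
case/andP=> H1 /forallP H2; apply/forallP => k.
by case: (unliftP j k) => [k' ->|->]; rewrite ?ext_lift ?ext_j.
Qed.

Lemma prod_ext n (j : 'I_n.+1) d v :
  \prod_(i < n.+1) vsel Rg (ext j d v i) = vsel Rg d * \prod_(i < n) vsel Rg (v i).
Proof.
rewrite (bigD1_ord j) //= ext_j; congr (_ * _); apply: eq_bigr => i _.
by rewrite ext_lift.
Qed.

Lemma cl01 (r : R) : 0 <= r <= 1 -> Num.min 1 (Num.max 0 r) = r.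
Proof.
case/andP=> h0 h1; rewrite (_ : Num.max 0 r = r); last by apply/max_idPr.
by apply/min_idPr.
Qed.

Lemma cl_in (r : R) : 0 <= Num.min 1 (Num.max 0 r) <= 1.
Proof.
apply/andP; split; first by rewrite le_min ler01 le_max lexx.
by rewrite ge_min lexx.
Qed.

Lemma face_ext n (T : 'rV[R]_n.+1 -> X) (j : 'I_n.+1) ce cv e v (c : R) :
  inV e v -> 0 <= c <= 1 ->
  face (precomp T (h (ext j ce e) (ext j cv v))) c j
  = precomp (face T ((@esel R ce + vsel R cv * c) / 3) j) (h e v).
Proof.
move=> /forallP HV Hc.
apply/funext => x; rewrite /face /precomp; congr T; apply/rowP => k.
rewrite /h /ins /clamp !mxE.
case: (unliftP j k) => [k' ->|->]; rewrite ?liftK ?unlift_none ?ext_lift ?ext_j.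
  rewrite !mxE cl01 ?cl_in //.
  have := cl_in (x ord0 k'); set y := Num.min 1 _ => /andP [y0 y1].
  rewrite cl01 //; have := HV k'.
  by case: (e k'); case: (v k') => //= _; rewrite /esel /vsel; apply/andP; split; lra.
by rewrite cl01.
Qed.


Lemma sum_SD m (T : 'rV[R]_m.+1 -> X) (G : ('rV[R]_m.+1 -> X) -> Rg) :
  \sum_(p <- @SD_gen R X Rg m.+1 T) p.1 * G p.2 =
  \sum_(e : {ffun 'I_m.+1 -> bool}) \sum_(v : {ffun 'I_m.+1 -> bool})
    (if inV e v then - (\prod_i vsel Rg (v i)) * G (precomp T (h e v)) else 0).
Proof.
rewrite /= big_map big_enum /=.
rewrite big_mkcond pair_big /=; apply: eq_bigr => -[e v] _ /=.
rewrite (_ : _ \in _ = inV e v) //; by apply/idP/idP; rewrite in_setE.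
Qed.

Lemma sum_bd (a b : Rg) n (T : 'rV[R]_n.+1 -> X) (G : ('rV[R]_n -> X) -> Rg) :
  \sum_(p <- bd_gen a b T) p.1 * G p.2 = \sum_(j < n.+1)
    ((-1) ^+ j * a * G (face T 0 j) + (-1) ^+ j * b * G (face T 1 j)).
Proof.
rewrite /bd_gen big_flatten big_map big_enum /=; apply: eq_bigr => j _.
by rewrite !big_cons big_nil addr0.
Qed.

Lemma swap4 (K : Type) (idx : K) (op : Monoid.com_law idx) (A B C D : finType) (F : A -> B -> C -> D -> K) :
  \big[op/idx]_a \big[op/idx]_b \big[op/idx]_c \big[op/idx]_d F a b c d = \big[op/idx]_b \big[op/idx]_d \big[op/idx]_a \big[op/idx]_c F a b c d.
Proof.
rewrite exchange_big; apply: eq_bigr => b _.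
under eq_bigr => a _ do rewrite exchange_big.
by rewrite exchange_big.
Qed.

Lemma gen (a b : Rg) n (T : 'rV[R]_n.+1 -> X) U :
  coeff (lin (@bd_gen R X Rg a b n) (@SD_gen R X Rg n.+1 T)) U
  = coeff (lin (@SD_gen R X Rg n) (@bd_gen R X Rg a b n T)) U.
Proof.
rewrite !coeff_lin (sum_SD T (fun q => coeff (@bd_gen R X Rg a b n q) U)) (sum_bd a b T (fun q => coeff (@SD_gen R X Rg n q) U)) /=.
symmetry; under eq_bigr => j _ do rewrite !coeff_SD !mulr_sumr -big_split /=; symmetry.
under eq_bigr => e _ do under eq_bigr => v _ do rewrite coeff_bd.
have E : forall (c : bool) (P : Rg) (f : 'I_n.+1 -> Rg),
  (if c then P * \sum_j f j else 0) = \sum_j (if c then P * f j else 0).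
  move=> c P f; case: c; first by rewrite mulr_sumr.
  by rewrite big1.
under eq_bigr => e _ do under eq_bigr => v _ do rewrite E.
under eq_bigr => e _ do rewrite exchange_big.
rewrite exchange_big; apply: eq_bigr => j _.
rewrite (sum_ext _ j).
under eq_bigr => ce _ do under eq_bigr => e' _ do rewrite (sum_ext _ j).
rewrite swap4; apply: eq_bigr => e' _; rewrite !mulr_sumr -big_split /=; apply: eq_bigr => v' _.
rewrite !big_bool !inV_ext !prod_ext.
case: (boolP (inV e' v')) => H; last first.
  rewrite !andbF /= !Monoid.simpm. by rewrite [LHS](_ : _ = (0 + 0 + 0 : Rg)) // !addr0.
rewrite !andbT /= !face_ext // ?lexx ?ler01 //.
rewrite /esel /vsel !mulr0 !mulr1 !mul1r !addr0.
have E1 : (0 : R) / 3 = 0 by rewrite mul0r.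
have E2 : (2 + 1 : R) / 3 = 1 by field.
have E3 : (2 + -1 : R) / 3 = (0 + 1) / 3 by congr (_ / _); ring.
rewrite ?E1 ?E2 ?E3 ?add0r.
ring.
Qed.

End Pf.

Theorem lemma3 (Rg : comPzRingType) (a b : Rg) (R : realType)
  (X : topologicalType) (n : nat) (c : chain R X Rg n.+1) :
  is_chain c ->
  coeff (lin (@bd_gen R X Rg a b n) (lin (@SD_gen R X Rg n.+1) c))
  = coeff (lin (@SD_gen R X Rg n) (lin (@bd_gen R X Rg a b n) c)).
Proof.
move=> _; apply/funext => U; rewrite !coeff_lin2.
by apply: eq_bigr => p _; rewrite gen.
Qed.
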